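(* Let $(\mathfrak M,\mathscr A)$ be a quasi-differentiable Banach manifold modelled on $X$ with $C^1$-kernel $\mathfrak M_0$, and let $\eta\in\mathfrak M_0$. Then: (1) the map $\varphi'(\eta):\mathcal T_\eta(\mathfrak M)\to X$ is well defined, i.e. for $\upsilon=f'(0)$ the value $(\varphi\circ\psi^{-1})'(\psi(\eta))(\psi\circ f)'(0)$ does not depend on the choice of the curve $f$ with $f'(0)=\upsilon$ nor on the $\mathfrak M_0$-regular chart $\psi$ at $\eta$ with $\psi\circ f$ continuously differentiable at $0$; (2) for any two $\mathfrak M_0$-regular charts $(\mathcal U,\varphi),(\mathcal V,\psi)$ at $\eta$ there are constants $C_1,C_2>0$ with $\|\upsilon\|_\psi\le C_1\|\upsilon\|_\varphi$ and $\|\upsilon\|_\varphi\le C_2\|\upsilon\|_\psi$ for all $\upsilon\in\mathcal T^{00}_\eta(\mathfrak M)$; (3) for every $\mathfrak M_0$-regular chart $(\mathcal U,\varphi)$ at $\eta$, $\varphi'(\eta):\mathcal T_\eta(\mathfrak M)\to X$ is a bijection.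
   Context: Densely embedded spaces and the class $\mathfrak C^k$. For Banach spaces $X$ and $X_0$, $X_0$ is a densely embedded Banach subspace of $X$ if $X_0$ is a dense linear subspace of $X$ and there is $C>0$ with $\|x\|_X\le C\|x\|_{X_0}$ for $x\in X_0$. For such $X_0\subseteq X$, a Banach space $Y$, an open set $U_0\subseteq X_0$ and an integer $k\ge1$, $\mathfrak C^k(U_0;X,Y)$ denotes the set of maps $F:U_0\to Y$ such that (i) for each $x_0\in U_0$ there are bounded symmetric $j$-linear maps $F^{(j)}(x_0):X^j\to Y$, $1\le j\le k$, with $\|F(x)-F(x_0)-\sum_{j=1}^k\frac1{j!}F^{(j)}(x_0)(x-x_0,\dots,x-x_0)\|_Y/\|x-x_0\|_{X_0}^k\to0$ as $\|x-x_0\|_{X_0}\to0$, and (ii) $x\mapsto F^{(j)}(x)$ is continuous from $U_0$ (with the $X_0$-topology) into the space $L^j(X,Y)$ of bounded $j$-linear maps. We write $F'=F^{(1)}$. Embedded submanifolds and quasi-differentiable manifolds. Let $\mathfrak M,\mathfrak M_0$ be topological Banach manifolds modelled on $X$, $X_0$, let $\mathscr A$ be a family of local charts of $\mathfrak M$, and $k\ge1$. $\mathfrak M_0$ is a $C^k$-embedded Banach submanifold of $\mathfrak M$ with respect to $\mathscr A$ if: (D1) $X_0$ is a densely embedded Banach subspace of $X$; (D2) $\mathfrak M_0\subseteq\mathfrak M$ and $\mathcal U\cap\mathfrak M_0$ is open in $\mathfrak M_0$ for every open $\mathcal U\subseteq\mathfrak M$; (D3) the domains of the charts of $\mathscr A$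 cover $\mathfrak M$; (D4) for $\eta\in\mathfrak M_0$ and $(\mathcal U,\varphi)\in\mathscr A$ with $\eta\in\mathcal U$, $(\mathcal U_0,\varphi|_{\mathcal U_0})$ with $\mathcal U_0:=\mathcal U\cap\mathfrak M_0$ is a local chart of $\mathfrak M_0$; (D5) for $\eta\in\mathfrak M_0$ and $(\mathcal U,\varphi),(\mathcal V,\psi)\in\mathscr A$ with $\eta\in\mathcal U\cap\mathcal V$, $\psi\circ\varphi^{-1}\in\mathfrak C^k(\varphi(\mathcal U_0\cap\mathcal V_0);X,X)$ and $\varphi\circ\psi^{-1}\in\mathfrak C^k(\psi(\mathcal U_0\cap\mathcal V_0);X,X)$. A chart of $\mathscr A$ whose domain contains $\eta$ is an $\mathfrak M_0$-regular local chart at $\eta$. $(\mathfrak M,\mathfrak M_0,\mathscr A)$ (with $\mathfrak M_0$ $C^1$-embedded) is inward spreadable if there is a Banach manifold $\mathfrak M_1\subseteq\mathfrak M_0$, modelled on a Banach space $X_1$, which is a $C^1$-embedded Banach submanifold of $\mathfrak M_0$ with respect to the restrictions to $\mathfrak M_0$ of the charts of $\mathscr A$ ($\mathfrak M_1$ is then an inner $C^1$-kernel and the charts of $\mathscr A$ are called $(\mathfrak M_0,\mathfrak M_1)$-regular). It is outward spreadable if there is a Banach manifold $\widetilde{\mathfrak M}\supseteq\mathfrak M$ with a chart family $\widetilde{\mathscr A}$ whose restrictions to $\mathfrak M$ form $\mathscr A$, such that $\mathfrak M$ is a $C^1$-embedded Banach submanifold of $\widetilde{\mathfrak M}$ with respect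 to $\widetilde{\mathscr A}$ ($\widetilde{\mathfrak M}$ is a shell). If both hold, $(\mathfrak M,\mathscr A)$ is a quasi-differentiable Banach manifold with $C^1$-kernel $\mathfrak M_0$. For charts at $\eta\in\mathfrak M_0$, $(\varphi\circ\psi^{-1})'(\psi(\eta))\in L(X)$ is the first derivative in the $\mathfrak C^1$ sense. Tangent vectors. Let $\eta\in\mathfrak M_0$. $\dot{\mathscr D}^{1s}_\eta$ is the set of real functions $F$ defined on a neighbourhood of $\eta$ in $\mathfrak M$ for which there is a neighbourhood $\mathcal O'$ of $\eta$ in $\mathfrak M$ such that for every $\mathfrak M_0$-regular chart $(\mathcal U,\varphi)$ at $\eta$, $F\circ\varphi^{-1}$ is Fréchet differentiable in the norm of $X$ on $\varphi(\mathcal O'\cap\mathcal U)$ with derivative continuous into $X^*$. A curve $f:(-\varepsilon,\varepsilon)\to\mathfrak M$ with $f(0)=\eta$ is continuously differentiable at $t=0$ if (after shrinking $\varepsilon$) there is an $\mathfrak M_0$-regular chart $(\mathcal U,\varphi)$ at $\eta$ with $t\mapsto\varphi(f(t))$ continuously differentiable on $(-\varepsilon,\varepsilon)$ in $X$, and $(\psi\circ f)'(0)=(\psi\circ\varphi^{-1})'(\varphi(\eta))(\varphi\circ f)'(0)$ for every $\mathfrak M_0$-regular chart $\psi$ at $\eta$ with $\psi\circ f$ continuously differentiable at $0$ in $X$. Its tangent vector is $f'(0):\dot{\mathscr D}^{1s}_\eta\to\mathbb R$, $f'(0)F=(F\circ f)'(0)$. $\mathcal T_\eta(\mathfrak M)$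 is the set of all such $f'(0)$. For an $\mathfrak M_0$-regular chart $\varphi$ at $\eta$, $\varphi'(\eta)\upsilon:=(\varphi\circ\psi^{-1})'(\psi(\eta))(\psi\circ f)'(0)$ for $\upsilon=f'(0)$, where $\psi$ is an $\mathfrak M_0$-regular chart at $\eta$ with $\psi\circ f$ continuously differentiable at $0$ in $X$; $\|\upsilon\|_\varphi:=\|\varphi'(\eta)\upsilon\|_X$. $\mathcal T^{00}_\eta(\mathfrak M)$ is the set of $f'(0)$ for curves $f:(-\varepsilon,\varepsilon)\to\mathfrak M_0$, $f(0)=\eta$, such that (after shrinking $\varepsilon$) for every $\mathfrak M_0$-regular chart $\varphi$ at $\eta$, $t\mapsto\varphi(f(t))$ is continuously differentiable on $(-\varepsilon,\varepsilon)$ in the norm of $X_0$. *)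

(* Defs.v *)
From HB Require Import structures.
From mathcomp Require Import all_boot all_order all_algebra.
From mathcomp Require Import all_classical all_reals all_analysis.
Set Implicit Arguments. Unset Strict Implicit. Unset Printing Implicit Defensive.
Import Order.TTheory GRing.Theory Num.Theory.
Import numFieldNormedType.Exports.
Local Open Scope classical_set_scope.
Local Open Scope ring_scope.

Record chart (M X : Type) := Chart { cdom : set M; cmap : M -> X; cinv : X -> M }.

Section Defs.
Variable R : realType.

Definition is_local_chart (M : topologicalType) (X : normedModType R)
  (c : chart M X) : Prop :=
  open (cdom c) /\ open (cmap c @` cdom c) /\
  (forall m, cdom c m -> cinv c (cmap c m) = m) /\
  {within cdom c, continuous (cmap c)} /\
  {within cmap c @` cdom c, continuous (cinv c)}.

Definition is_top_manifold (M : topologicalType) (X : normedModType R) : Prop :=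
  forall m : M, exists c : chart M X, is_local_chart c /\ cdom c m.

Definition dense_embedding (X0 X : normedModType R) (i : X0 -> X) : Prop :=
  (forall (a : R) (u v : X0), i (a *: u + v) = a *: i u + i v) /\
  injective i /\
  (exists C : R, 0 < C /\ forall x, `|i x| <= C * `|x|) /\
  dense (range i).

Definition isC1 (X0 X Y : normedModType R) (i : X0 -> X) (S : set X0)
  (F : X0 -> Y) (DF : X0 -> X -> Y) : Prop :=
  forall x, S x ->
    (forall (a : R) (u v : X), DF x (a *: u + v) = a *: DF x u + DF x v) /\
    (exists K : R, forall v, `|DF x v| <= K * `|v|) /\
    (forall e : R, 0 < e -> exists d : R, 0 < d /\ forall y, S y ->
        `|y - x| < d -> `|F y - F x - DF x (i y - i x)| <= e * `|y - x|) /\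
    (forall e : R, 0 < e -> exists d : R, 0 < d /\ forall y, S y ->
        `|y - x| < d -> forall v, `|DF y v - DF x v| <= e * `|v|).

Section Embedded.
Variables (X0 X : normedModType R) (i : X0 -> X)
  (M0 M : topologicalType) (j : M0 -> M).

Definition restricts (c0 : chart M0 X0) (c : chart M X) : Prop :=
  (forall m, cdom c0 m <-> cdom c (j m)) /\
  (forall m, cdom c0 m -> i (cmap c0 m) = cmap c (j m)).

(* phi(U0 ∩ V0) (as a subset of X0) for phi = c, psi = d *)
Definition tdom (c d : chart M X) : set X0 :=
  [set x | exists m, cdom c (j m) /\ cdom d (j m) /\ i x = cmap c (j m)].

Definition trans (c d : chart M X) : X0 -> X := fun x => cmap d (cinv c (i x)).

Definition C1_embedded (A : set (chart M X)) : Prop :=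
  dense_embedding i /\
  is_top_manifold M X /\ is_top_manifold M0 X0 /\
  (forall c, A c -> is_local_chart c) /\
  injective j /\
  (forall U, open U -> open (j @^-1` U)) /\
  (forall m : M, exists c, A c /\ cdom c m) /\
  (forall eta : M0, forall c, A c -> cdom c (j eta) ->
              exists c0 : chart M0 X0, is_local_chart c0 /\ restricts c0 c) /\
  (forall eta : M0, forall c d, A c -> A d -> cdom c (j eta) ->
              cdom d (j eta) ->
              (exists DF, isC1 i (tdom c d) (trans c d) DF) /\
              (exists DF, isC1 i (tdom d c) (trans d c) DF)).

Definition restr_family (A : set (chart M X)) : set (chart M0 X0) :=
  [set c0 | is_local_chart c0 /\ exists c, A c /\ restricts c0 c].

End Embedded.

Definition inward_spreadable (X0 X : completeNormedModType R) (i : X0 -> X)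
  (M0 M : topologicalType) (j : M0 -> M) (A : set (chart M X)) : Prop :=
  exists (X1 : completeNormedModType R) (i1 : X1 -> X0)
         (M1 : topologicalType) (j1 : M1 -> M0),
    C1_embedded i1 j1 (restr_family i j A).

Definition outward_spreadable (X : completeNormedModType R)
  (M : topologicalType) (A : set (chart M X)) : Prop :=
  exists (Xt : completeNormedModType R) (it : X -> Xt)
         (Mt : topologicalType) (jt : M -> Mt) (At : set (chart Mt Xt)),
    C1_embedded it jt At /\
    (forall c, A c -> exists ct, At ct /\ restricts it jt c ct) /\
    (forall ct, At ct -> (exists m, cdom ct (jt m)) ->
        exists c, A c /\ restricts it jt c ct).

Definition quasi_differentiable (X0 X : completeNormedModType R) (i : X0 -> X)
  (M0 M : topologicalType) (j : M0 -> M) (A : set (chart M X)) : Prop :=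
  C1_embedded i j A /\ inward_spreadable i j A /\ outward_spreadable A.

Section Tangent.
Variables (X0 X : completeNormedModType R) (i : X0 -> X)
  (M0 M : topologicalType) (j : M0 -> M) (A : set (chart M X)) (eta : M0).

Definition regular (c : chart M X) : Prop := A c /\ cdom c (j eta).

Definition trans_deriv (c d : chart M X) (D : X -> X) : Prop :=
  exists DF, isC1 i (tdom i j c d) (trans i c d) DF /\
  exists p, i p = cmap c (j eta) /\ D = DF p.

Definition C1on (V : normedModType R) (g : R -> V) (e : R) : Prop :=
  forall t : R, - e < t < e ->
    derivable g t 1 /\ (derive1 g) s @[s --> t] --> derive1 g t.

Definition C1at_chart (c : chart M X) (f : R -> M) : Prop :=
  exists e : R, 0 < e /\ (forall t : R, - e < t < e -> cdom c (f t)) /\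
    C1on (cmap c \o f) e.

Definition C1_curve (f : R -> M) : Prop :=
  f 0 = j eta /\
  exists c, regular c /\ C1at_chart c f /\
    forall d, regular d -> C1at_chart d f -> forall D, trans_deriv c d D ->
      derive1 (cmap d \o f) 0 = D (derive1 (cmap c \o f) 0).

Definition D1s (F : M -> R) : Prop :=
  exists O, nbhs (j eta) O /\ forall c, regular c ->
    let S := cmap c @` (O `&` cdom c) in
    (forall x, S x -> differentiable (F \o cinv c) x) /\
    (forall x, S x -> forall e : R, 0 < e -> exists d : R, 0 < d /\
       forall y, S y -> `|y - x| < d -> forall v,
         `|'d (F \o cinv c) y v - 'd (F \o cinv c) x v| <= e * `|v|).

Definition same_tangent (f g : R -> M) : Prop :=
  forall F, D1s F -> derive1 (F \o f) 0 = derive1 (F \o g) 0.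

(* v = phi'(eta) (f'(0)) for phi = c *)
Definition tderiv (c : chart M X) (f : R -> M) (v : X) : Prop :=
  exists g, C1_curve g /\ same_tangent g f /\
    exists d, regular d /\ C1at_chart d g /\
      exists D, trans_deriv d c D /\ v = D (derive1 (cmap d \o g) 0).

Definition T00_curve (f : R -> M0) : Prop :=
  f 0 = eta /\ forall c, regular c ->
    exists e : R, 0 < e /\ exists p : R -> X0,
      (forall t : R, - e < t < e -> cdom c (j (f t)) /\ i (p t) = cmap c (j (f t))) /\
      C1on p e.

End Tangent.
End Defs.

(* Main.v *)
Require Import Defs.
From HB Require Import structures.
From mathcomp Require Import all_boot all_order all_algebra.
From mathcomp Require Import all_classical all_reals all_analysis.
From mathcomp Require Import ring lra.
Import Order.TTheory GRing.Theory Num.Theory.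
Import numFieldNormedType.Exports.
Local Open Scope classical_set_scope.
Local Open Scope ring_scope.

Section AnaHelp.
Variables (R : realType) (V W : normedModType R).

Lemma est_of_diff (G : V -> W) (x : V) : differentiable G x ->
  forall e : R, 0 < e -> exists d : R, 0 < d /\ forall y, `|y - x| < d ->
    `|G y - G x - 'd G x (y - x)| <= e * `|y - x|.
Proof.
move=> /diff_locally /eqaddoP Hd e e0.
have /nbhs_norm0P [d d0 Hdd] := Hd e e0.
exists d; split => // y yx.
have := Hdd (y - x) yx; rewrite /=.
by rewrite !fctE /= subrK opprD addrA.
Qed.

Lemma diff_of_est (G : V -> W) (x : V) (L : V -> W) :
  (forall (a : R) u v, L (a *: u + v) = a *: L u + L v) ->
  (exists K : R, forall v, `|L v| <= K * `|v|) ->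
  (forall e : R, 0 < e -> exists d : R, 0 < d /\ forall y, `|y - x| < d ->
    `|G y - G x - L (y - x)| <= e * `|y - x|) ->
  differentiable G x /\ ('d G x : V -> W) = L.
Proof.
move=> Llin [K HK] Hest.
pose LM := GRing.isLinear.Build _ _ _ _ _ Llin.
pose LL : {linear V -> W} := HB.pack_for {linear V -> W} L LM.
have Lc : continuous LL.
  apply: bounded_linear_continuous; apply/bounded_funP => r.
  exists (`|K| * `|r|) => v vr.
  apply: (le_trans (HK v)); apply: (le_trans (ler_norm _)).
  rewrite normrM (normr_id) ler_wpM2l //.
  exact: (le_trans vr (ler_norm _)).
have E : G \o shift x = cst (G x) + LL +o_ 0 id.
  apply/eqaddoP => e e0; apply/nbhs_norm0P.
  have [d [d0 Hd]] := Hest e e0.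
  exists d => // h /= hd.
  have := Hd (h + x); rewrite addrK => /(_ hd).
  by rewrite opprD addrA.
have dE : 'd G x = LL :> (V -> W) by apply: diff_unique.
split; last by rewrite dE.
apply/diff_locallyP; rewrite dE; split => //.
Qed.

End AnaHelp.

Section AnaHelp3.
Variables (R : realType) (V W : normedModType R).

Lemma lin0 (L : V -> W) : (forall (a : R) u v, L (a *: u + v) = a *: L u + L v) ->
  L 0 = 0.
Proof.
move=> Ll; have := Ll 1 0 0; rewrite !scale1r addr0 => E.
by apply/esym/(addrI (L 0)); rewrite addr0 -{1}E.
Qed.

Lemma linZ (L : V -> W) : (forall (a : R) u v, L (a *: u + v) = a *: L u + L v) ->
  forall (a : R) u, L (a *: u) = a *: L u.
Proof. by move=> Ll a u; have := Ll a u 0; rewrite !addr0 (lin0 _ Ll) addr0. Qed.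

Lemma linD (L : V -> W) : (forall (a : R) u v, L (a *: u + v) = a *: L u + L v) ->
  forall u v, L (u + v) = L u + L v.
Proof. by move=> Ll u v; have := Ll 1 u v; rewrite !scale1r. Qed.

Lemma linN (L : V -> W) : (forall (a : R) u v, L (a *: u + v) = a *: L u + L v) ->
  forall u, L (- u) = - L u.
Proof. by move=> Ll u; rewrite -scaleN1r (linZ _ Ll) scaleN1r. Qed.

Lemma linB (L : V -> W) : (forall (a : R) u v, L (a *: u + v) = a *: L u + L v) ->
  forall u v, L (u - v) = L u - L v.
Proof. by move=> Ll u v; rewrite (linD _ Ll) (linN _ Ll). Qed.

Lemma lin_cont (L : V -> W) : (forall (a : R) u v, L (a *: u + v) = a *: L u + L v) ->
  (exists K : R, forall v, `|L v| <= K * `|v|) -> continuous L.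
Proof.
move=> Llin [K HK].
pose LM := GRing.isLinear.Build _ _ _ _ _ Llin.
pose LL : {linear V -> W} := HB.pack_for {linear V -> W} L LM.
have : continuous LL.
  apply: bounded_linear_continuous; apply/bounded_funP => r.
  exists (`|K| * `|r|) => v vr.
  apply: (le_trans (HK v)); apply: (le_trans (ler_norm _)).
  rewrite normrM (normr_id) ler_wpM2l //.
  exact: (le_trans vr (ler_norm _)).
by [].
Qed.

End AnaHelp3.
Arguments lin0 {R V W L}.
Arguments linZ {R V W L}.
Arguments linD {R V W L}.
Arguments linN {R V W L}.
Arguments linB {R V W L}.
Arguments lin_cont {R V W L}.
Arguments est_of_diff {R V W G x}.
Arguments diff_of_est {R V W G x L}.

Section AnaHelp2.
Variables (R : realType) (V W : normedModType R).

Lemma dense_eq (T : Type) (i : T -> V) (f g : V -> W) :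
  dense (range i) -> continuous f -> continuous g ->
  (forall h, f (i h) = g (i h)) -> f = g.
Proof.
move=> Hd cf cg Hfg; apply/funext => z.
apply/eqP/negPn/negP => Hne.
have e0 : 0 < `|f z - g z| / 2 by rewrite divr_gt0 // normr_gt0 subr_eq0.
have H1 : \forall y \near z, `|f z - f y| < `|f z - g z| / 2.
  by apply: cvgr_dist_lt => //; exact: cf.
have H2 : \forall y \near z, `|g z - g y| < `|f z - g z| / 2.
  by apply: cvgr_dist_lt => //; exact: cg.
have H3 : \forall y \near z, `|f z - f y| < `|f z - g z| / 2 /\
    `|g z - g y| < `|f z - g z| / 2.
  by near=> y; split; near: y.
move: H3 => /nbhs_ballP [r /= r0 Hr].
have [y [By [h _ hy]]] := Hd (ball z r) (ex_intro _ z (ballxx z r0)) (ball_open z r).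
have [Hf Hg] := Hr y By.
have : `|f z - g z| < `|f z - g z|.
  have E : f z - g z = (f z - f y) - (g z - g y).
    by rewrite -hy Hfg opprB addrA subrK.
  rewrite {1}E.
  apply: (le_lt_trans (ler_normB _ _)).
  by rewrite [ltRHS]splitr; apply: ltrD.
by rewrite ltxx.
Unshelve. all: by end_near. Qed.

End AnaHelp2.
Arguments dense_eq {R V W T i f g}.

Section HB.
Variables (R : realType) (V : normedModType R) (z : V).

Definition hb_good (G : set (V * R)) :=
  [/\ G (z, `|z|),
      (forall x a b, G (x, a) -> G (x, b) -> a = b),
      (forall x y a b (t : R), G (x, a) -> G (y, b) -> G (t *: x + y, t * a + b))
    & (forall x a, G (x, a) -> a <= `|x|)].

Lemma hb_good0 G : hb_good G -> G (0, 0).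
Proof.
case=> Gz _ Glin _.
have := Glin _ _ _ _ (-1) Gz Gz.
by rewrite scaleN1r mulN1r !addNr.
Qed.

Lemma hb_goodZ G x a (t : R) : hb_good G -> G (x, a) -> G (t *: x, t * a).
Proof.
move=> gG Gx; have := (let: And4 _ _ Glin _ := gG in Glin) _ _ _ _ t Gx (hb_good0 _ gG).
by rewrite !addr0.
Qed.

Lemma hb_goodB G x y a b : hb_good G -> G (x, a) -> G (y, b) -> G (y - x, b - a).
Proof.
move=> gG Gx Gy; have := (let: And4 _ _ Glin _ := gG in Glin) _ _ _ _ (-1) Gx Gy.
by rewrite scaleN1r mulN1r addrC [- a + _]addrC.
Qed.


Definition hb_P (G : set (V * R)) := G = set0 \/ hb_good G.

Lemma hb_P_good G p : hb_P G -> G p -> hb_good G.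
Proof. by case=> // -> . Qed.

Lemma hb_chain F : F `<=` hb_P -> total_on F subset ->
  hb_P (\bigcup_(X in F) X).
Proof.
move=> FP Ftot.
have two : forall p1 p2, (\bigcup_(X in F) X) p1 -> (\bigcup_(X in F) X) p2 ->
    exists G, [/\ F G, hb_good G, G p1 & G p2].
  move=> p1 p2 [G1 F1 G1p] [G2 F2 G2p].
  have [S12|S21] := Ftot _ _ F1 F2.
    by exists G2; split => //; [exact: (hb_P_good _ _ (FP _ F2) G2p)|exact: S12].
  by exists G1; split => //; [exact: (hb_P_good _ _ (FP _ F1) G1p)|exact: S21].
have [[p Up]|N] := pselect (exists p, (\bigcup_(X in F) X) p); last first.
  left; apply/seteqP; split => // p Up; apply: N; by exists p.
right; split.
- have [G [FG gG _ _]] := two _ _ Up Up.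
  by exists G => //; case: gG.
- move=> x a b Ha Hb; have [G [FG gG Ga Gb]] := two _ _ Ha Hb.
  by case: gG => _ Gf _ _; exact: Gf Ga Gb.
- move=> x y a b t Ha Hb; have [G [FG gG Ga Gb]] := two _ _ Ha Hb.
  by exists G => //; case: gG => _ _ Gl _; exact: Gl.
- move=> x a Ha; have [G [FG gG Ga _]] := two _ _ Ha Ha.
  by case: gG => _ _ _ Gd; exact: Gd.
Qed.


Lemma hb_extend G x0 : hb_good G -> ~ (exists a, G (x0, a)) ->
  exists B, hb_good B /\ G `<` B.
Proof.
move=> gG Nx0.
have [Gz Gf Gl Gd] := gG.
pose S := [set r : R | exists u a, G (u, a) /\ r = a - `|u - x0|].
have ubS : forall w b, G (w, b) -> ubound S (`|w + x0| - b).
  move=> w b Gw _ [u [a [Gu ->]]].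
  have Guw := Gl _ _ _ _ 1 Gu Gw; rewrite scale1r mul1r in Guw.
  have H1 := Gd _ _ Guw.
  have H2 : `|u + w| <= `|u - x0| + `|w + x0|.
    have -> : u + w = (u - x0) + (w + x0) by rewrite addrA addrAC subrK.
    exact: ler_normD.
  lra.
have G00 := hb_good0 _ gG.
have S0 : S (0 - `|0 - x0|) by exists 0, 0.
have hasS : has_sup S.
  split; first by exists (0 - `|0 - x0|).
  by exists (`|0 + x0| - 0); exact: ubS G00.
pose c := sup S.
have c_ge : forall u a, G (u, a) -> a - `|u - x0| <= c.
  by move=> u a Gu; apply: sup_upper_bound => //; exists u, a.
have c_le : forall w b, G (w, b) -> c <= `|w + x0| - b.
  move=> w b Gw; apply: ge_sup; first by exists (0 - `|0 - x0|).
  exact: ubS.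
pose B := [set p | exists y a t, G (y, a) /\ p = (y + t *: x0, a + t * c)].
have tuniq : forall y1 y2 a1 a2 t1 t2, G (y1, a1) -> G (y2, a2) ->
    y1 + t1 *: x0 = y2 + t2 *: x0 -> t1 = t2.
  move=> y1 y2 a1 a2 t1 t2 G1 G2 E.
  apply/eqP/negPn/negP => Ht; apply: Nx0.
  have Ht' : t1 - t2 != 0 by rewrite subr_eq0.
  have E2 : (t1 - t2) *: x0 = y2 - y1.
    have E' : t1 *: x0 = y2 + t2 *: x0 - y1 by rewrite -E addrAC subrr add0r.
    by rewrite scalerBl E' addrAC addrK.
  exists ((t1 - t2)^-1 * (a2 - a1)).
  have -> : x0 = (t1 - t2)^-1 *: (y2 - y1) by rewrite -E2 scalerA mulVf // scale1r.
  apply: hb_goodZ => //; exact: hb_goodB.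
exists B; split; last first.
  split.
    move=> [y a] Gy; exists y, a, 0; split => //.
    by rewrite scale0r mul0r !addr0.
  move=> AB; apply: Nx0; exists c.
  apply: AB; exists 0, 0, 1; split => //.
  by rewrite scale1r mul1r !add0r.
split.
- exists z, `|z|, 0; split => //.
  by rewrite scale0r mul0r !addr0.
- move=> x a b [y1 [a1 [t1 [G1 [E1 E1']]]]] [y2 [a2 [t2 [G2 [E2 E2']]]]].
  have Et : t1 = t2 by apply: (tuniq y1 y2 a1 a2) => //; rewrite -E1 -E2.
  subst t2.
  have Ey : y1 = y2 by apply/(addIr (t1 *: x0)); rewrite -E1 -E2.
  subst y2.
  by rewrite E1' E2' (Gf _ _ _ G1 G2).
- move=> x y a b t [y1 [a1 [t1 [G1 [-> ->]]]]] [y2 [a2 [t2 [G2 [-> ->]]]]].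
  exists (t *: y1 + y2), (t * a1 + a2), (t * t1 + t2); split; first exact: Gl.
  congr (_, _).
    by rewrite scalerDr scalerDl scalerA addrACA.
  ring.
- move=> x a [y [a1 [t [Gy [-> ->]]]]].
  have [tp|tn|->] := ltgtP t 0.
  +
    pose s := - t.
    have sp : 0 < s by rewrite /s oppr_gt0.
    have Gu : G (s^-1 *: y, s^-1 * a1) by apply: hb_goodZ.
    have H := c_ge _ _ Gu.
    have En : `|y + t *: x0| = s * `|s^-1 *: y - x0|.
      rewrite -{1}(gtr0_norm sp) -normrZ scalerBr scalerA mulfV ?gt_eqF //.
      by rewrite scale1r /s scaleNr opprK.
    have Ea : s * (s^-1 * a1) = a1 by rewrite mulrA mulfV ?gt_eqF // mul1r.
    have : s * (s^-1 * a1 - `|s^-1 *: y - x0|) <= s * c by rewrite ler_pM2l.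
    rewrite mulrBr Ea -En /s => H'.
    lra.
  +
    have Gu : G (t^-1 *: y, t^-1 * a1) by apply: hb_goodZ.
    have H := c_le _ _ Gu.
    have En : `|y + t *: x0| = t * `|t^-1 *: y + x0|.
      rewrite -{2}(gtr0_norm tn) -normrZ scalerDr scalerA mulfV ?gt_eqF //.
      by rewrite scale1r.
    have Ea : t * (t^-1 * a1) = a1 by rewrite mulrA mulfV ?gt_eqF // mul1r.
    have : t * c <= t * (`|t^-1 *: y + x0| - t^-1 * a1) by rewrite ler_pM2l.
    rewrite mulrBr Ea -En => H'.
    lra.
  + by rewrite scale0r mul0r !addr0; exact: Gd.
Qed.

Lemma hb_span : z != 0 -> hb_good [set p | exists t : R, p = (t *: z, t * `|z|)].
Proof.
move=> z0; split.
- by exists 1; rewrite scale1r mul1r.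
- move=> x a b [t [-> ->]] [s [Ex ->]].
  have E : (t - s) *: z = 0 by rewrite scalerBl Ex subrr.
  suff -> : t = s by [].
  apply/eqP; rewrite -subr_eq0; apply/negPn/negP => ts.
  have : z = 0 by rewrite -[z]scale1r -(mulVf ts) -scalerA E scaler0.
  by move/eqP; rewrite (negbTE z0).
- move=> x y a b t [t1 [-> ->]] [t2 [-> ->]].
  exists (t * t1 + t2); congr (_, _).
    by rewrite scalerDl scalerA.
  by rewrite mulrDl mulrA.
- move=> x a [t [-> ->]].
  by rewrite normrZ ler_wpM2r // ler_norm.
Qed.

End HB.

Lemma hahn_banach_sep (R : realType) (V : normedModType R) (z : V) : z != 0 ->
  exists l : V -> R, (forall (a : R) u v, l (a *: u + v) = a * l u + l v) /\
    (forall v, `|l v| <= `|v|) /\ l z != 0.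
Proof.
move=> z0.
have [A [PA Amax]] := Zorn_bigcup (@hb_chain R V z).
have gA : hb_good R V z A.
  case: PA => // A0.
  have gS := @hb_span R V z z0.
  exfalso; apply: (Amax _ _ (or_intror gS)).
  rewrite A0; split => //.
  by move=> /(_ (z, `|z|)) H; have := H (ex_intro _ 1 _); rewrite scale1r mul1r => /(_ erefl).
have tot : forall x, exists a, A (x, a).
  move=> x; apply/not_existsP => N.
  have [B [gB AB]] := @hb_extend R V z A x gA (fun '(ex_intro a Ha) => N a Ha).
  exact: (Amax _ AB (or_intror gB)).
have [Az Af Al Ad] := gA.
pose l x := xget 0 [set a | A (x, a)].
have lP : forall x, A (x, l x) by move=> x; apply: (@xgetPex _ 0 [set a | A (x, a)]); exact: tot.
exists l; split; [|split].
- move=> a u v; apply: (Af (a *: u + v)); first exact: lP.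
  exact: Al.
- move=> v; rewrite ler_norml (Ad _ _ (lP v)) andbT.
  have := @hb_goodZ R V z A v (l v) (-1) gA (lP v).
  rewrite scaleN1r mulN1r => /(Ad _ _); rewrite normrN lerNl.
  by [].
- by rewrite (Af _ _ _ (lP z) Az) normr_eq0.
Qed.

Lemma chart_img_open (R : realType) (T : topologicalType) (Y : normedModType R)
  (c : chart T Y) (W : set T) : is_local_chart c -> open W ->
  open (cmap c @` (cdom c `&` W)).
Proof.
move=> [odom [oimg [cK [cc ci]]]] oW.
rewrite continuous_open_subspace // in ci.
rewrite openE => _ [m [dm Wm] <-].
rewrite /interior.
have ciy : \forall y \near cmap c m, (cdom c `&` W) (cinv c y).
  have := ci (cmap c m) (mem_set (imageP _ dm)).
  rewrite /continuous_at cK //; apply.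
  by apply: open_nbhs_nbhs; split; [exact: openI|].
have imy : \forall y \near cmap c m, (cmap c @` cdom c) y.
  by apply: open_nbhs_nbhs; split => //; exact: imageP.
near=> y.
have : (cmap c @` cdom c) y by near: y.
case=> m' dm' Em'.
have : (cdom c `&` W) (cinv c y) by near: y.
by rewrite -Em' cK // => Hm'; exists m'.
Unshelve. all: by end_near. Qed.
Arguments chart_img_open {R T Y c W}.

Lemma open_ball_ex (R : realType) (V : normedModType R) (S : set V) (p : V) :
  open S -> S p -> exists r : R, 0 < r /\ forall y, `|y - p| < r -> S y.
Proof.
move=> oS Sp; have : nbhs p S by apply: open_nbhs_nbhs.
move=> /nbhs_ballP [r /= r0 Hr]; exists r; split => // y yp.
apply: Hr; rewrite -ball_normE /= distrC //.
Qed.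

Arguments open_ball_ex {R V S p}.

Section Main.
Variables (R : realType) (X0 X : completeNormedModType R) (i : X0 -> X)
  (M0 M : topologicalType) (j : M0 -> M) (A : set (chart M X))
  (HE : C1_embedded i j A) (eta : M0).

Let reg := regular j A eta.

Lemma HE_lin : forall (a : R) u v, i (a *: u + v) = a *: i u + i v.
Proof. by case: HE => [[? _] _]. Qed.
Lemma HE_inj : injective i.
Proof. by case: HE => [[_ [? _]] _]. Qed.
Lemma HE_bnd : exists C : R, 0 < C /\ forall x, `|i x| <= C * `|x|.
Proof. by case: HE => [[_ [_ [? _]]] _]. Qed.
Lemma HE_dense : dense (range i).
Proof. by case: HE => [[_ [_ [_ ?]]] _]. Qed.
Lemma HE_chart c : A c -> is_local_chart c.
Proof. by case: HE => _ [_ [_ [H _]]]; exact: H. Qed.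
Lemma HE_D2 U : open U -> open (j @^-1` U).
Proof. by case: HE => _ [_ [_ [_ [_ [H _]]]]]; exact: H. Qed.
Lemma HE_D4 c : A c -> cdom c (j eta) ->
  exists c0 : chart M0 X0, is_local_chart c0 /\ restricts i j c0 c.
Proof. by case: HE => _ [_ [_ [_ [_ [_ [_ [H _]]]]]]]; exact: H. Qed.
Lemma HE_D5 c d : A c -> A d -> cdom c (j eta) -> cdom d (j eta) ->
  exists DF, isC1 i (tdom i j c d) (trans i c d) DF.
Proof.
by case: HE => _ [_ [_ [_ [_ [_ [_ [_ H]]]]]]] Ac Ad dc dd; case: (H eta c d Ac Ad dc dd).
Qed.

Lemma base_pt c : reg c -> exists p, i p = cmap c (j eta) /\
  forall d, reg d -> exists r : R, 0 < r /\ forall y, `|y - p| < r -> tdom i j c d y.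
Proof.
move=> [Ac dc]; have [c0 [lc0 [rd rm]]] := HE_D4 _ Ac dc.
have d0 : cdom c0 eta by apply/rd.
exists (cmap c0 eta); split; first exact: rm.
move=> d [Ad dd].
have [_ [_ [_ [_ _]]]] := lc0.
have od : open (cdom d) by case: (HE_chart _ Ad).
have := chart_img_open lc0 (HE_D2 _ od).
move=> /open_ball_ex /(_ (imageP _ (conj d0 dd))) [r [r0 Hr]].
exists r; split => // y /Hr [m [dm dmd] <-].
exists m; split; [exact/rd|split; [exact: dmd|exact: rm]].
Qed.

Lemma trans_deriv_ex c d : reg c -> reg d -> exists D, trans_deriv i j eta c d D.
Proof.
move=> rc rd; have [p [ip _]] := base_pt _ rc.
have [DF HDF] := HE_D5 _ _ (proj1 rc) (proj1 rd) (proj2 rc) (proj2 rd).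
by exists (DF p), DF; split => //; exists p.
Qed.
Arguments trans_deriv_ex {c d}.

Lemma diff_affine (w b : X) (t : R) :
  differentiable (fun s : R => s *: w + b) t /\
  ('d (fun s : R => s *: w + b) t : R -> X) = (fun s => s *: w).
Proof.
apply: diff_of_est.
- by move=> a u v; rewrite scalerDl scalerA.
- by exists `|w| => v; rewrite normrZ mulrC.
- move=> e e0; exists 1; split => // y _.
  have -> : y *: w + b - (t *: w + b) = (y - t) *: w.
    by rewrite scalerBl opprD addrACA subrr addr0.
  by rewrite subrr normr0 mulr_ge0 // ltW.
Qed.

Lemma chainL F c d D : reg c -> reg d -> trans_deriv i j eta c d D ->
  D1s j A eta F -> forall z,
  'd (F \o cinv c) (cmap c (j eta)) z = 'd (F \o cinv d) (cmap d (j eta)) (D z).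
Proof.
move=> rc rd [DF [HDF [p [ip ->]]]] [OO [nO HF]].
have Sp : tdom i j c d p by exists eta; split; [exact: (proj2 rc)|split; [exact: (proj2 rd)|exact: ip]].
have [Dlin [[K HK] [Hest Hcont]]] := HDF p Sp.
have [r [r0 Hr]] : exists r : R, 0 < r /\ forall y, `|y - p| < r -> tdom i j c d y.
  have [p' [ip' Hp']] := base_pt _ rc.
  have <- : p' = p by apply: HE_inj; rewrite ip ip'.
  exact: Hp'.
have Oeta : OO (j eta) by apply: nbhs_singleton.
have lc := HE_chart _ (proj1 rc).
have ld := HE_chart _ (proj1 rd).
have [_ [_ [cKc _]]] := lc.
have [_ [_ [cKd _]]] := ld.
have dGc : differentiable (F \o cinv c) (cmap c (j eta)).
  by apply: (proj1 (HF c rc)); exists (j eta) => //; split => //; exact: (proj2 rc).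
have dGd : differentiable (F \o cinv d) (cmap d (j eta)).
  by apply: (proj1 (HF d rd)); exists (j eta) => //; split => //; exact: (proj2 rd).
set xc := cmap c (j eta) in dGc *.
set xd := cmap d (j eta) in dGd *.
have key : forall h, 'd (F \o cinv c) xc (i h) = 'd (F \o cinv d) xd (DF p (i h)).
  move=> h.
  pose g1 := fun s : R => s *: i h + xc.
  pose g2 := fun s : R => trans i c d (s *: h + p).
  have [dg1 Eg1] := diff_affine (i h) xc 0.
  have g10 : g1 0 = xc by rewrite /g1 scale0r add0r.
  have g20 : g2 0 = xd.
    by rewrite /g2 scale0r add0r /trans ip cKc //; exact: (proj2 rc).
  have [dg2 Eg2] : differentiable g2 0 /\ ('d g2 0 : R -> X) = (fun s => s *: DF p (i h)).
    apply: diff_of_est.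
    - by move=> a u v; rewrite scalerDl scalerA.
    - by exists `|DF p (i h)| => v; rewrite normrZ mulrC.
    move=> e e0.
    have eh0 : 0 < e / (`|h| + 1) by rewrite divr_gt0 // ltr_wpDl.
    have [dl [dl0 Hdl]] := Hest _ eh0.
    exists (Num.min dl r / (`|h| + 1)); split.
      by rewrite divr_gt0 // ?lt_min ?dl0 ?r0 // ltr_wpDl.
    move=> y; rewrite subr0 => yd.
    have yh : `|y| * `|h| < Num.min dl r.
      rewrite ltr_pdivlMr ?ltr_wpDl // in yd.
      apply: le_lt_trans yd; rewrite ler_wpM2l // lerDl //.
    have Ey : `|(y *: h + p) - p| = `|y| * `|h| by rewrite addrK normrZ.
    have Sy : tdom i j c d (y *: h + p).
      by apply: Hr; rewrite Ey; apply: (lt_le_trans yh); rewrite ge_min lexx orbT.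
    have yh2 : `|y *: h + p - p| < dl.
      by rewrite Ey; apply: (lt_le_trans yh); rewrite ge_min lexx.
    have := Hdl _ Sy yh2; rewrite Ey.
    rewrite HE_lin addrK (linZ Dlin) /g2 scale0r add0r.
    move=> H; apply: (le_trans H).
    have -> : e / (`|h| + 1) * (`|y| * `|h|) = e * `|y| * (`|h| / (`|h| + 1)) by ring.
    rewrite -[leRHS]mulr1 ler_wpM2l //.
      by rewrite mulr_ge0 // ltW.
    by rewrite ler_pdivrMr ?ltr_wpDl // mul1r lerDl.
  have eqn : \forall s \near 0, ((F \o cinv c) \o g1) s = ((F \o cinv d) \o g2) s.
    have rh0 : 0 < r / (`|h| + 1) by rewrite divr_gt0 // ltr_wpDl.
    apply/nbhs_norm0P; exists (r / (`|h| + 1)) => // s /= sr.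
    have Ss : tdom i j c d (s *: h + p).
      apply: Hr; rewrite addrK normrZ.
      rewrite ltr_pdivlMr ?ltr_wpDl // in sr.
      apply: le_lt_trans sr; rewrite ler_wpM2l // lerDl //.
    have [m [cm [dm im]]] := Ss.
    have E1 : g1 s = cmap c (j m) by rewrite /g1 /xc -ip -im HE_lin.
    by rewrite E1 /= /g2 /trans im cKc // cKd.
  have := near_eq_derive (1 : R) eqn.
  rewrite -!derive1E.
  rewrite !derive1E'; last 2 first.
  - by apply: differentiable_comp => //; rewrite g20.
  - by apply: differentiable_comp => //; rewrite g10.
  have dGc1 : differentiable (F \o cinv c) (g1 0) by rewrite g10.
  have dGd2 : differentiable (F \o cinv d) (g2 0) by rewrite g20.
  rewrite (@diff_comp _ _ _ _ g1 (F \o cinv c) 0 dg1 dGc1).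
  rewrite (@diff_comp _ _ _ _ g2 (F \o cinv d) 0 dg2 dGd2).
  by rewrite /= Eg1 Eg2 g10 g20 !scale1r.
move=> z.
have E : ('d (F \o cinv c) xc : X -> R) = 'd (F \o cinv d) xd \o DF p.
  apply: (dense_eq HE_dense) => //.
  - exact: diff_continuous.
  - move=> x; apply: continuous_comp.
      exact: (lin_cont Dlin (ex_intro _ K HK)).
    exact: diff_continuous.
by rewrite E.
Qed.
Arguments chainL {F c d D}.

Lemma curveP F d (g : R -> M) : reg d -> g 0 = j eta -> C1at_chart d g ->
  D1s j A eta F ->
  derive1 (F \o g) 0 = 'd (F \o cinv d) (cmap d (j eta)) (derive1 (cmap d \o g) 0).
Proof.
move=> rd g0 [e [e0 [Hdom HC1]]] [OO [nO HF]].
have Oeta : OO (j eta) by apply: nbhs_singleton.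
have ld := HE_chart _ (proj1 rd).
have [_ [_ [cKd _]]] := ld.
have dGd : differentiable (F \o cinv d) (cmap d (j eta)).
  by apply: (proj1 (HF d rd)); exists (j eta) => //; split => //; exact: (proj2 rd).
have [der0 _] := HC1 0 (ltac:(by rewrite oppr_lt0 e0)).
have dg : differentiable (cmap d \o g) 0 by apply/derivable1_diffP.
have dG2 : differentiable (F \o cinv d) ((cmap d \o g) 0) by rewrite /= g0.
have eqn : \forall t \near 0, (F \o g) t = ((F \o cinv d) \o (cmap d \o g)) t.
  apply/nbhs_norm0P; exists e => // t /= te.
  by rewrite cKd //; apply: Hdom; rewrite -ltr_norml.
have E1 : derive1 (F \o g) 0 = derive1 ((F \o cinv d) \o (cmap d \o g)) 0.
  by rewrite !derive1E (near_eq_derive (1 : R) eqn).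
have dc := @differentiable_comp _ _ _ _ _ _ 0 dg dG2.
rewrite E1 (derive1E' dc).
rewrite (@diff_comp _ _ _ _ (cmap d \o g) (F \o cinv d) 0 dg dG2) /=.
by rewrite (derive1E' dg) g0.
Qed.
Arguments curveP {F d g}.

Lemma near_open_itv (e t : R) : - e < t < e -> \forall s \near t, - e < s < e.
Proof.
move=> Ht; have := @near_in_itvoo R (- e) e t.
rewrite in_itv /= => /(_ Ht); apply: filterS => s.
by rewrite in_itv.
Qed.

Lemma line_curve c v : reg c ->
  let f := fun t : R => cinv c (t *: v + cmap c (j eta)) in
  C1at_chart c f /\ f 0 = j eta /\ derive1 (cmap c \o f) 0 = v.
Proof.
move=> rc f.
have lc := HE_chart _ (proj1 rc).
have [odc [oimg [cK _]]] := lc.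
set xc := cmap c (j eta) in f *.
have [r [r0 Hr]] := open_ball_ex oimg (imageP _ (proj2 rc)).
have v1 : 0 < `|v| + 1 by rewrite ltr_wpDl.
pose e := r / (`|v| + 1).
have e0 : 0 < e by rewrite divr_gt0.
have inimg : forall t, - e < t < e -> (cmap c @` cdom c) (t *: v + xc).
  move=> t Ht; apply: Hr; rewrite addrK normrZ.
  have te : `|t| < e by rewrite ltr_norml.
  rewrite /e ltr_pdivlMr // in te.
  by apply: le_lt_trans te; rewrite ler_wpM2l // lerDl.
have ft : forall t, - e < t < e -> cdom c (f t) /\ cmap c (f t) = t *: v + xc.
  move=> t /inimg [m dm Em]; rewrite /f -Em cK //.
pose a := fun s : R => s *: v + xc.
have eqn : forall t, - e < t < e -> \forall s \near t, a s = (cmap c \o f) s.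
  move=> t /(near_open_itv e t); apply: filterS => s /ft [_ E]; by rewrite /= E.
have Da : forall t, - e < t < e -> derivable (cmap c \o f) t 1 /\
    derive1 (cmap c \o f) t = v.
  move=> t Ht; have [da Ea] := diff_affine v xc t.
  split.
    apply: (near_eq_derivable (eqn t Ht)); exact/derivable1_diffP.
  rewrite derive1E -(near_eq_derive (1 : R) (eqn t Ht)) -derive1E.
  by rewrite (derive1E' da) Ea scale1r.
have H0 : - e < 0 < e by rewrite oppr_lt0 e0.
split; last first.
  split; first by rewrite /f scale0r add0r cK //; exact: (proj2 rc).
  exact: (proj2 (Da 0 H0)).
exists e; split => //; split; first by move=> t /ft [].
move=> t Ht; split; first exact: (proj1 (Da t Ht)).
rewrite (proj2 (Da t Ht)).
have Hn : {near t, cst v =1 derive1 (cmap c \o f)}.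
  move: (near_open_itv _ _ Ht); apply: filterS => s Hs.
  by rewrite /cst (proj2 (Da s Hs)).
exact: cvg_trans (near_eq_cvg Hn) (cvg_cst v).
Qed.
Arguments line_curve {c} v.

Section Shell.
Variables (Xt : completeNormedModType R) (it : X -> Xt) (Mt : topologicalType)
  (jt : M -> Mt) (At : set (chart Mt Xt)) (HS : C1_embedded it jt At)
  (Hres : forall c, A c -> exists ct, At ct /\ restricts it jt c ct).

Lemma HS_lin : forall (a : R) u v, it (a *: u + v) = a *: it u + it v.
Proof. by case: HS => [[? _] _]. Qed.
Lemma HS_inj : injective it.
Proof. by case: HS => [[_ [? _]] _]. Qed.
Lemma HS_bnd : exists C : R, 0 < C /\ forall x, `|it x| <= C * `|x|.
Proof. by case: HS => [[_ [_ [? _]]] _]. Qed.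
Lemma HS_chart c : At c -> is_local_chart c.
Proof. by case: HS => _ [_ [_ [H _]]]; exact: H. Qed.
Lemma HS_D5 (m : M) c d : At c -> At d -> cdom c (jt m) -> cdom d (jt m) ->
  exists DF, isC1 it (tdom it jt c d) (trans it c d) DF.
Proof.
by case: HS => _ [_ [_ [_ [_ [_ [_ [_ H]]]]]]] Ac Ad dc dd; case: (H m c d Ac Ad dc dd).
Qed.

Lemma testF (c : chart M X) : reg c -> forall z1 z2,
  (forall F, D1s j A eta F ->
    'd (F \o cinv c) (cmap c (j eta)) z1 = 'd (F \o cinv c) (cmap c (j eta)) z2) ->
  z1 = z2.
Proof.
move=> rc z1 z2 Hz; apply/eqP/negPn/negP => z12.
have [C [C0 HC]] := HS_bnd.
have itz : it (z1 - z2) != 0.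
  apply/negP => /eqP E; move: z12; rewrite -subr_eq0 => /negP; apply.
  by apply/eqP; apply: HS_inj; rewrite E (lin0 HS_lin).
have [l [llin [lb lz]]] := @hahn_banach_sep _ _ _ itz.
have llin' : forall (a : R) u v, l (a *: u + v) = a *: l u + l v by exact: llin.
have [ct [Act [rdom rmap]]] := Hres _ (proj1 rc).
have lc := HE_chart _ (proj1 rc).
have [odc [_ [cKc _]]] := lc.
pose F := fun m => l (cmap ct (jt m)).
have FD : D1s j A eta F.
  exists (cdom c); split.
    by apply: open_nbhs_nbhs; split => //; exact: (proj2 rc).
  move=> c' rc' /=.
  have [ct' [Act' [rdom' rmap']]] := Hres _ (proj1 rc').
  have lc' := HE_chart _ (proj1 rc').
  have [_ [_ [cKc' _]]] := lc'.
  have lct' := HS_chart _ Act'.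
  have [_ [_ [cKct' _]]] := lct'.
  have [DF HDF] := @HS_D5 (j eta) ct' ct Act' Act
    (proj1 (rdom' _) (proj2 rc')) (proj1 (rdom _) (proj2 rc)).
  have inT : forall m, cdom c m -> cdom c' m -> tdom it jt ct' ct (cmap c' m).
    move=> m dm dm'; exists m; split; first exact/rdom'.
    by split; [exact/rdom|exact: rmap'].
  have FT : forall m, cdom c m -> cdom c' m ->
      F (cinv c' (cmap c' m)) = l (trans it ct' ct (cmap c' m)).
    move=> m dm dm'; rewrite cKc' // /F /trans rmap' // cKct' //; exact/rdom'.
  have DiffS : forall x, (cmap c' @` (cdom c `&` cdom c')) x ->
      differentiable (F \o cinv c') x /\
      ('d (F \o cinv c') x : X -> R) = (fun v => l (DF x (it v))).
    move=> _ [m [dm dm'] <-].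
    have [Llin [[K HK] [Hest _]]] := HDF _ (inT m dm dm').
    have oQ := chart_img_open lc' odc.
    have [r [r0 Hr]] := open_ball_ex oQ (imageP _ (conj dm' dm)).
    apply: diff_of_est.
    - move=> a u v; rewrite HS_lin Llin llin //.
    - exists (`|K| * C) => v.
      apply: (le_trans (lb _)); apply: (le_trans (HK _)).
      apply: (le_trans (ler_wpM2r (normr_ge0 _) (ler_norm K))).
      by rewrite -mulrA ler_wpM2l.
    - move=> e e0; have [dl [dl0 Hdl]] := Hest _ e0.
      exists (Num.min dl r); split; first by rewrite lt_min dl0 r0.
      move=> y yx.
      have yr : `|y - cmap c' m| < r by apply: (lt_le_trans yx); rewrite ge_min lexx orbT.
      have yd : `|y - cmap c' m| < dl by apply: (lt_le_trans yx); rewrite ge_min lexx.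
      have [m' [dm'' dm2] Ey] := Hr _ yr.
      rewrite -Ey in yd *.
      have := Hdl _ (inT m' dm2 dm'') yd.
      rewrite /= FT // FT //.
      move=> H; apply: le_trans H.
      rewrite -!(linB llin') (linB HS_lin); exact: (lb _).
  split.
    by move=> x Sx; exact: (proj1 (DiffS x Sx)).
  move=> x Sx e e0.
  have [_ [_ [_ Hcont]]] := HDF _ (let: ex_intro2 m (conj dm dm') E := Sx in
    (eq_ind _ (fun x => tdom it jt ct' ct x) (inT m dm dm') _ E)).
  have eC : 0 < e / C by rewrite divr_gt0.
  have [dl [dl0 Hdl]] := Hcont _ eC.
  exists dl; split => // y Sy yx v.
  have [m' [dm1 dm2] Ey] := Sy.
  rewrite (proj2 (DiffS y Sy)) (proj2 (DiffS x Sx)) /=.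
  rewrite -(linB llin').
  apply: (le_trans (lb _)).
  have := Hdl y (eq_ind _ (fun x => tdom it jt ct' ct x) (inT m' dm1 dm2) _ Ey) yx (it v).
  move=> H; apply: (le_trans H).
  apply: (le_trans (ler_wpM2l (ltW eC) (HC v))).
  by rewrite mulrA divfK ?gt_eqF.
have [_ [oimg _]] := lc.
have dGc : ('d (F \o cinv c) (cmap c (j eta)) : X -> R) = (fun v => l (it v)).
  have [r [r0 Hr]] := open_ball_ex oimg (imageP _ (proj2 rc)).
  apply: (proj2 (diff_of_est _ _ _)).
  - by move=> a u v; rewrite HS_lin llin.
  - exists C => v; apply: (le_trans (lb _)); exact: HC.
  - move=> e e0; exists r; split => // y yr.
    have [m' dm' Ey] := Hr _ yr.
    rewrite /= -Ey /F !cKc //; last exact: (proj2 rc).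
    rewrite -rmap // -rmap; last exact: (proj2 rc).
    rewrite -!(linB llin') -(linB HS_lin) subrr (lin0 llin') normr0.
    by rewrite mulr_ge0 // ltW.
have := Hz F FD; rewrite dGc => E.
move: lz; rewrite (linB HS_lin) (linB llin') E subrr.
by rewrite eqxx.
Qed.
Arguments testF {c}.

Lemma tderivQ c f v : reg c -> tderiv i j A eta c f v ->
  forall F, D1s j A eta F -> derive1 (F \o f) 0 = 'd (F \o cinv c) (cmap c (j eta)) v.
Proof.
move=> rc [g [Cg [stg [d [rd [Cd [D [tdD ->]]]]]]]] F FD.
rewrite -(stg F FD) (curveP rd (proj1 Cg) Cd FD).
exact: chainL.
Qed.
Arguments tderivQ {c f v}.

Lemma td_bound c d E : reg c -> reg d -> trans_deriv i j eta c d E ->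
  exists K : R, forall v, `|E v| <= K * `|v|.
Proof.
move=> rc rd [DF [HDF [p [ip ->]]]].
have Sp : tdom i j c d p.
  by exists eta; split; [exact: (proj2 rc)|split; [exact: (proj2 rd)|exact: ip]].
by have [_ [HK _]] := HDF p Sp.
Qed.
Arguments td_bound {c d E}.

Lemma main_shell :
  (forall c, regular j A eta c ->
     forall f g : R -> M,
       C1_curve i j A eta f -> C1_curve i j A eta g ->
       same_tangent j A eta f g ->
       forall d1 d2, regular j A eta d1 -> regular j A eta d2 ->
       C1at_chart d1 f -> C1at_chart d2 g ->
       forall D1 D2, trans_deriv i j eta d1 c D1 -> trans_deriv i j eta d2 c D2 ->
       D1 (derive1 (cmap d1 \o f) 0) = D2 (derive1 (cmap d2 \o g) 0)) /\
  (forall c d, regular j A eta c -> regular j A eta d ->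
     exists C1 C2 : R, 0 < C1 /\ 0 < C2 /\
       forall f : R -> M0, T00_curve i j A eta f ->
       forall vc vd, tderiv i j A eta c (j \o f) vc -> tderiv i j A eta d (j \o f) vd ->
         `|vd| <= C1 * `|vc| /\ `|vc| <= C2 * `|vd|) /\
  (forall c, regular j A eta c ->
     (forall f, C1_curve i j A eta f -> exists v, tderiv i j A eta c f v) /\
     (forall f g v, C1_curve i j A eta f -> C1_curve i j A eta g ->
        tderiv i j A eta c f v -> tderiv i j A eta c g v -> same_tangent j A eta f g) /\
     (forall v : X, exists f, C1_curve i j A eta f /\ tderiv i j A eta c f v)).
Proof.
split; [|split].
- move=> c rc f g Cf Cg stfg d1 d2 rd1 rd2 C1f C1g D1 D2 td1 td2.
  apply: (testF rc) => F FD.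
  rewrite -(chainL rd1 rc td1 FD) -(chainL rd2 rc td2 FD).
  rewrite -(curveP rd1 (proj1 Cf) C1f FD) -(curveP rd2 (proj1 Cg) C1g FD).
  exact: stfg.
- move=> c d rc rd.
  have [E tE] := trans_deriv_ex rc rd.
  have [E' tE'] := trans_deriv_ex rd rc.
  have [K HK] := td_bound rc rd tE.
  have [K' HK'] := td_bound rd rc tE'.
  exists (`|K| + 1), (`|K'| + 1); split; first by rewrite ltr_wpDl.
  split; first by rewrite ltr_wpDl.
  move=> f _ vc vd tc td.
  have Ed : vd = E vc.
    apply: (testF rd) => F FD.
    by rewrite -(tderivQ rd td F FD) (tderivQ rc tc F FD) (chainL rc rd tE FD).
  have Ec : vc = E' vd.
    apply: (testF rc) => F FD.
    by rewrite -(tderivQ rc tc F FD) (tderivQ rd td F FD) (chainL rd rc tE' FD).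
  split.
    rewrite {1}Ed; apply: (le_trans (HK _)); apply: (le_trans (ler_wpM2r (normr_ge0 _) (ler_norm K))).
    by rewrite ler_wpM2r // lerDl.
  rewrite {1}Ec; apply: (le_trans (HK' _)); apply: (le_trans (ler_wpM2r (normr_ge0 _) (ler_norm K'))).
  by rewrite ler_wpM2r // lerDl.
- move=> c rc; split; [|split].
  + move=> f Cf; have [f0 [c1 [rc1 [C1c1 _]]]] := Cf.
    have [D tD] := trans_deriv_ex rc1 rc.
    exists (D (derive1 (cmap c1 \o f) 0)), f; split => //; split; first by [].
    by exists c1; split => //; split => //; exists D.
  + move=> f g v Cf Cg tf tg F FD.
    by rewrite (tderivQ rc tf F FD) (tderivQ rc tg F FD).
  + move=> v.
    have [C1f [f0 Df]] := line_curve v rc.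
    set f := fun t : R => cinv c (t *: v + cmap c (j eta)) in C1f f0 Df *.
    have Cf : C1_curve i j A eta f.
      split => //; exists c; split => //; split => //.
      move=> d rd C1d D tD; rewrite Df.
      apply: (testF rd) => F FD.
      rewrite -(curveP rd f0 C1d FD) -(chainL rc rd tD FD) -Df.
      exact: curveP.
    exists f; split => //.
    exists f; split => //; split; first by [].
    have [D tD] := trans_deriv_ex rc rc.
    exists c; split => //; split => //; exists D; split => //.
    rewrite Df; apply: (testF rc) => F FD.
    exact: chainL.
Qed.

End Shell.

End Main.

Theorem lemma2p10 (R : realType) (X0 X : completeNormedModType R) (i : X0 -> X)
  (M0 M : topologicalType) (j : M0 -> M) (A : set (chart M X))
  (HA : quasi_differentiable i j A) (eta : M0) :
  (* (1) phi'(eta) is well defined *)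
  (forall c, regular j A eta c ->
     forall f g : R -> M,
       C1_curve i j A eta f -> C1_curve i j A eta g ->
       same_tangent j A eta f g ->
       forall d1 d2, regular j A eta d1 -> regular j A eta d2 ->
       C1at_chart d1 f -> C1at_chart d2 g ->
       forall D1 D2, trans_deriv i j eta d1 c D1 -> trans_deriv i j eta d2 c D2 ->
       D1 (derive1 (cmap d1 \o f) 0) = D2 (derive1 (cmap d2 \o g) 0)) /\
  (* (2) equivalence of the norms on T^{00}_eta *)
  (forall c d, regular j A eta c -> regular j A eta d ->
     exists C1 C2 : R, 0 < C1 /\ 0 < C2 /\
       forall f : R -> M0, T00_curve i j A eta f ->
       forall vc vd, tderiv i j A eta c (j \o f) vc -> tderiv i j A eta d (j \o f) vd ->
         `|vd| <= C1 * `|vc| /\ `|vc| <= C2 * `|vd|) /\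
  (* (3) phi'(eta) : T_eta(M) -> X is a bijection *)
  (forall c, regular j A eta c ->
     (forall f, C1_curve i j A eta f -> exists v, tderiv i j A eta c f v) /\
     (forall f g v, C1_curve i j A eta f -> C1_curve i j A eta g ->
        tderiv i j A eta c f v -> tderiv i j A eta c g v -> same_tangent j A eta f g) /\
     (forall v : X, exists f, C1_curve i j A eta f /\ tderiv i j A eta c f v)).
Proof.
move: HA => [HE [_ [Xt [it [Mt [jt [At [HS [Hres _]]]]]]]]].
exact: (@main_shell R X0 X i M0 M j A HE eta Xt it Mt jt At HS Hres).
Qed.
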